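(* Let $[X,d,m]$ be a metric random walk space with invariant and reversible probability measure $\nu$. Then $h_m(X)=\lambda_1^m(X)$, where $$h_m(X)=\inf\Big\{\frac{P_m(D)}{\min\{\nu(D),\nu(X\setminus D)\}}: D\subset X \ \nu\text{-measurable},\ 0<\nu(D)<1\Big\},$$ $$\lambda_1^m(X)=\inf\big\{TV_m(u): u\in L^1(X,\nu),\ \|u\|_{L^1(X,\nu)}=1,\ 0\in{\rm med}_\nu(u)\big\}.$$
   Context: A metric random walk space $[X,d,m]$ is a Polish metric space $(X,d)$ with a family $m=(m_x)_{x\in X}$ of Borel probability measures, $x\mapsto m_x(A)$ Borel measurable, each with finite first moment. A Radon measure $\nu$ is invariant if $\nu(A)=\int_X m_x(A)d\nu(x)$ for all $\nu$-measurable $A$, reversible if $dm_x(y)d\nu(x)=dm_y(x)d\nu(y)$. The $m$-perimeter is $P_m(E)=\int_E\int_{X\setminus E}dm_x(y)d\nu(x)$ and the $m$-total variation is $TV_m(u)=\frac12\int_X\int_X|u(y)-u(x)|\,dm_x(y)d\nu(x)$. A number $\mu$ is a median of $u$ with respect to $\nu$, written $\mu\in{\rm med}_\nu(u)$, if $\nu(\{u<\mu\})\le\frac12\nu(X)$ and $\nu(\{u>\mu\})\le\frac12\nu(X)$. *)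

(* Defs.v *)
From HB Require Import structures.
From mathcomp Require Import all_boot all_order all_algebra.
From mathcomp Require Import all_classical all_reals all_analysis.
Set Implicit Arguments. Unset Strict Implicit. Unset Printing Implicit Defensive.
Import Order.TTheory GRing.Theory Num.Theory.
Local Open Scope classical_set_scope.
Local Open Scope ring_scope.

Section MRW.
Context {R : realType}.

Section Metric.
Variable (T : Type) (dist : T -> T -> R).

Definition is_metric : Prop :=
  [/\ (forall x y, 0 <= dist x y),
      (forall x y, dist x y = 0 <-> x = y),
      (forall x y, dist x y = dist y x) &
      (forall x y z, dist x z <= dist x y + dist y z)].

Definition d_open (A : set T) : Prop :=
  forall x, A x -> exists e : R, 0 < e /\ forall y, dist x y < e -> A y.

Definition d_complete : Prop :=
  forall u : nat -> T,
    (forall e : R, 0 < e -> exists N, forall n k, (N <= n)%N -> (N <= k)%N ->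
        dist (u n) (u k) < e) ->
    exists l, forall e : R, 0 < e -> exists N, forall n, (N <= n)%N -> dist (u n) l < e.

Definition d_separable : Prop :=
  exists S : set T, countable S /\
    forall x (e : R), 0 < e -> exists s, S s /\ dist x s < e.

Definition polish_metric : Prop := [/\ is_metric, d_complete & d_separable].
End Metric.

Context {d : measure_display} {X : measurableType d}.

Definition borel_for (dist : X -> X -> R) : Prop :=
  (@measurable d X) = <<s [set A | d_open dist A] >>.

Definition metric_random_walk_space (dist : X -> X -> R)
    (m : R.-pker X ~> X) : Prop :=
  [/\ polish_metric dist, borel_for dist &
      forall x, (\int[m x]_y (dist x y)%:E < +oo)%E].

Definition m_invariant (m : R.-pker X ~> X) (nu : {measure set X -> \bar R}) : Prop :=
  forall A, measurable A -> nu A = (\int[nu]_x m x A)%E.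

(* dm_x(y)dnu(x) = dm_y(x)dnu(y) as measures on X x X, tested on rectangles A x B *)
Definition m_reversible (m : R.-pker X ~> X) (nu : {measure set X -> \bar R}) : Prop :=
  forall A B, measurable A -> measurable B ->
    (\int[nu]_(x in A) m x B)%E = (\int[nu]_(x in B) m x A)%E.

Definition Pm (m : R.-pker X ~> X) (nu : {measure set X -> \bar R}) (E : set X) : \bar R :=
  (\int[nu]_(x in E) m x (~` E))%E.

Definition TVm (m : R.-pker X ~> X) (nu : {measure set X -> \bar R}) (u : X -> R) : \bar R :=
  ((2%:R^-1)%:E * \int[nu]_x \int[m x]_y `|u y - u x|%:E)%E.

Definition is_median (nu : {measure set X -> \bar R}) (u : X -> R) (mu : R) : Prop :=
  (nu [set x | (u x < mu)%R] <= (2%:R^-1)%:E * nu setT)%E /\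
  (nu [set x | (u x > mu)%R] <= (2%:R^-1)%:E * nu setT)%E.

Definition cheeger_const (m : R.-pker X ~> X) (nu : {measure set X -> \bar R}) : \bar R :=
  ereal_inf [set (Pm m nu D / Order.min (nu D) (nu (~` D)))%E | D in
     [set D : set X | measurable D /\ (0 < nu D)%E /\ (nu D < 1)%E]].

Definition lambda1 (m : R.-pker X ~> X) (nu : {measure set X -> \bar R}) : \bar R :=
  ereal_inf [set TVm m nu u | u in
     [set u : X -> R | measurable_fun setT u /\ nu.-integrable setT (EFin \o u) /\
        (\int[nu]_x `|u x|%:E = 1)%E /\ is_median nu u 0]].

End MRW.

(* Main.v *)
Require Import Defs.
From HB Require Import structures.
From mathcomp Require Import all_boot all_order all_algebra.
From mathcomp Require Import all_classical all_reals all_analysis.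
From mathcomp Require Import measurable_realfun.
From mathcomp Require Import lra ring.
Set Implicit Arguments. Unset Strict Implicit. Unset Printing Implicit Defensive.
Import Order.TTheory GRing.Theory Num.Theory.
Local Open Scope ring_scope.
Local Open Scope classical_set_scope.
Local Open Scope ring_scope.

Section RealLemmas.
Context {R : realType}.

Lemma count_aux (dl a b : R) (t : nat -> R) : 0 < dl ->
  (forall k, t k = 0 \/ (t k = 1 /\ a <= k%:R * dl < b)) ->
  forall n, (\sum_(0 <= k < n) dl * t k = 0) \/
    exists j : nat, [/\ (j < n)%N, j%:R * dl < b &
       \sum_(0 <= k < n) dl * t k <= j%:R * dl + dl - a].
Proof.
move=> dl0 ht; elim=> [|n IH]; first by left; rewrite big_geq.
rewrite big_nat_recr //=.
have [->|[-> /andP[an nb]]] := ht n.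
  rewrite mulr0 addr0; case: IH => [->|[j [jn jb hj]]]; first by left.
  by right; exists j; split => //; apply: ltnW.
right; case: IH => [->|[j [jn jb hj]]].
  by exists n; split => //; lra.
exists n; split => //.
have : j.+1%:R * dl <= n%:R * dl.
  by apply: ler_wpM2r; [exact: ltW | rewrite ler_nat].
rewrite -addn1 natrD mulrDl mul1r; lra.
Qed.

Lemma count_le (dl a b : R) (t : nat -> R) : 0 < dl -> a <= b ->
  (forall k, t k = 0 \/ (t k = 1 /\ a <= k%:R * dl < b)) ->
  forall n, \sum_(0 <= k < n) dl * t k <= b - a + dl.
Proof.
move=> dl0 ab ht n; have [->|[j [_ jb hj]]] := count_aux dl0 ht n.
  lra.
lra.
Qed.

Lemma ltpos (dl a : R) (k : nat) : 0 < dl ->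
  (k%:R * dl < a) = (k%:R * dl < Order.max a 0).
Proof.
move=> dl0; have k0 : 0 <= k%:R * dl by rewrite mulr_ge0 // ltW.
case: (lerP a 0) => a0.
  by apply/idP/idP => h; lra.
by [].
Qed.

Lemma L1 (dl a b : R) : 0 < dl -> forall n,
  \sum_(0 <= k < n) dl * `|(((k%:R * dl < b)%R)%:R - ((k%:R * dl < a)%R)%:R)|
    <= `|(Order.max b 0 - Order.max a 0)| + dl.
Proof.
move=> dl0 n.
have E : forall k, ((k%:R * dl < b)%R)%:R - ((k%:R * dl < a)%R)%:R =
   ((k%:R * dl < Order.max b 0)%R)%:R - ((k%:R * dl < Order.max a 0)%R)%:R :> R.
  by move=> k; rewrite -!ltpos.
under eq_bigr do rewrite E.
move: (Order.max a 0) (Order.max b 0) => {E}; clear a b => a b.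
wlog ab : a b / a <= b.
  move=> H; case: (boolP (a <= b)) => h; first exact: H.
  move: h; rewrite -ltNge => /ltW h.
  rewrite distrC; under eq_bigr do rewrite distrC.
  exact: H.
rewrite ger0_norm ?subr_ge0 //.
apply: (count_le dl0 ab) => k.
case: (ltrP (k%:R * dl) b) => kb; case: (ltrP (k%:R * dl) a) => ka /=.
- by left; rewrite subrr normr0.
- by right; rewrite subr0 normr1; split => //; apply/andP.
- lra.
- by left; rewrite subrr normr0.
Qed.

Lemma L2 (dl a : R) : 0 < dl -> exists n,
  Order.max a 0 <= \sum_(0 <= k < n) dl * ((k%:R * dl < a)%R)%:R + dl.
Proof.
move=> dl0; case: (lerP a 0) => a0.
  by exists 0%N; rewrite big_geq //; lra.
exists (Num.trunc (a / dl)).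
have hle : (Num.trunc (a / dl))%:R <= a / dl.
  by rewrite truncn_le divr_ge0 // ltW.
have hgt := truncnS_gt (a / dl).
rewrite (eq_big_nat _ _ (F2 := fun=> dl)); last first.
  move=> k /andP[_ kn]; suff -> : (k%:R * dl < a)%R = true by rewrite mulr1.
  apply/idP.
  have : (k.+1%:R : R) <= (Num.trunc (a / dl))%:R by rewrite ler_nat.
  rewrite -addn1 natrD => h.
  rewrite -(ler_pM2r dl0) in hle; rewrite mulfVK ?gt_eqF // in hle.
  have : (k%:R + 1) * dl <= (Num.trunc (a / dl))%:R * dl by apply: ler_wpM2r; [exact: ltW|].
  lra.
rewrite big_const_nat subn0.
rewrite -(ltr_pM2r dl0) mulfVK ?gt_eqF // in hgt.
rewrite -addn1 natrD mulrDl mul1r in hgt.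
rewrite iter_addr addr0 -mulr_natr mulrC; lra.
Qed.

Lemma maxdist (a b : R) : `|(Order.max b 0 - Order.max a 0)| + `|(Order.max (-b) 0 - Order.max (-a) 0)| = `|(b - a)|.
Proof.
case: (lerP a 0) => ha; case: (lerP b 0) => hb; case: (lerP (-a) 0) => ha'; case: (lerP (-b) 0) => hb';
  try lra;
case: (ger0P (b - a)) => h1; rewrite ?sub0r ?subr0 ?normrN;
  repeat match goal with |- context [`|?e|] => case: (ger0P e) => ? end; lra.
Qed.
Lemma absmax (a : R) : `|a| = Order.max a 0 + Order.max (-a) 0.
Proof.
case: (lerP a 0) => ha; case: (lerP (-a) 0) => ha'; try lra;
case: (ger0P a) => ?; lra.
Qed.
End RealLemmas.

Section M.
Context (R : realType) (disp : measure_display) (X : measurableType disp)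
  (m : R.-pker X ~> X) (nu : probability X R).
Local Open Scope ereal_scope.

Lemma mTV (f : X -> R) : measurable_fun setT f ->
  measurable_fun setT (fun x : X => (\int[m x]_y (`|(f y - f x)%R|)%:E : \bar R)).
Proof.
move=> mf.
apply: (measurable_fun_integral_finite_kernel (fun z : X * X => (`|(f z.2 - f z.1)%R|)%:E) m).
  by move=> z.
apply/measurable_EFinP; apply: measurableT_comp => //.
apply: measurable_funB.
  exact: measurableT_comp mf measurable_snd.
exact: measurableT_comp mf measurable_fst.
Qed.

Definition gE (E : set X) x : \bar R := \int[m x]_y (`|(\1_E y - \1_E x)%R|)%:E.

Lemma mgE E : measurable E -> measurable_fun setT (gE E).
Proof. by move=> mE; apply: mTV; exact: measurable_indic. Qed.

Lemma gE_in E x : measurable E -> E x -> gE E x = m x (~` E).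
Proof.
move=> mE Ex; rewrite /gE.
rewrite (eq_integral (fun y => (\1_(~` E) y)%:E)); last first.
  move=> y _; congr EFin; rewrite !indicE.
  have -> : (x \in E) = true by apply/mem_set.
  case: (boolP (y \in E)) => yE.
    have -> : (y \in ~` E) = false by apply/negbTE; rewrite in_setC yE.
    by rewrite subrr normr0.
  have -> : (y \in ~` E) = true by rewrite in_setC yE.
  by rewrite sub0r normrN normr1.
by rewrite integral_indic //= ?setIT //; exact: measurableC.
Qed.

Lemma gE_out E x : measurable E -> ~ E x -> gE E x = m x E.
Proof.
move=> mE Ex; rewrite /gE.
rewrite (eq_integral (fun y => (\1_E y)%:E)); last first.
  move=> y _; congr EFin; rewrite !indicE.
  have -> : (x \in E) = false by apply/negbTE/negP => /set_mem.
  by rewrite subr0 ger0_norm.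
by rewrite integral_indic //= setIT.
Qed.

Lemma int_gE E : measurable E -> m_reversible m nu ->
  \int[nu]_x gE E x = Pm m nu E + Pm m nu E.
Proof.
move=> mE rev.
have -> : \int[nu]_x gE E x = \int[nu]_(x in E `|` ~` E) gE E x by rewrite setUv.
rewrite ge0_integral_setU //; first last.
- by rewrite /disj_set setICr.
- by move=> x _; apply: integral_ge0.
- by rewrite setUv; exact: mgE.
- exact: measurableC.
rewrite (eq_integral (fun x => m x (~` E))); last first.
  by move=> x /set_mem Ex; rewrite gE_in.
rewrite [X in _ + X](eq_integral (fun x => m x E)); last first.
  by move=> x /set_mem Ex; rewrite gE_out.
by rewrite /Pm rev //; exact: measurableC.
Qed.


Lemma nuT : (nu : {measure set X -> \bar R}) setT = 1.
Proof. exact: probability_setT. Qed.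

Lemma Pm_ge0 E : 0 <= Pm m nu E.
Proof. by apply: integral_ge0 => x _. Qed.

Lemma TV_scaled E a : measurable E -> (0 <= a)%R -> m_reversible m nu ->
  TVm m nu (fun x => a * \1_E x)%R = a%:E * Pm m nu E.
Proof.
move=> mE a0 rev; rewrite /TVm.
have -> : (fun x => \int[m x]_y (`|(a * \1_E y - a * \1_E x)%R|)%:E) =
          (fun x => a%:E * gE E x).
  apply: funext => x; rewrite /gE -ge0_integralZl //; last first.
    apply/measurable_EFinP; apply: measurableT_comp => //.
    apply: measurable_funB; first exact: measurable_indic.
    exact: measurable_cst.
  apply: eq_integral => y _.
  by rewrite -mulrBr normrM (ger0_norm a0) EFinM.
rewrite ge0_integralZl //; last first.
  by move=> x _; apply: integral_ge0.
  exact: mgE.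
rewrite int_gE // -{1 2}(mul1e (Pm m nu E)) -ge0_muleDl ?lee01 //.
rewrite muleCA muleA -EFinD -EFinM muleA -EFinM.
have -> : (a / 2%:R * (1 + 1) = a :> R)%R.
  by rewrite -mulrA mulVf ?mulr1 // (_ : 1 + 1 = 2%:R)%R // pnatr_eq0.
by [].
Qed.

Lemma lam_le E a : measurable E -> m_reversible m nu ->
  (nu : {measure set X -> \bar R}) E = a%:E ->
  (0 < a)%R -> (a <= 2%:R^-1)%R -> lambda1 m nu <= (a^-1)%:E * Pm m nu E.
Proof.
move=> mE rev nuE a0 a2.
rewrite -TV_scaled //; last by rewrite invr_ge0 ltW.
apply: ereal_inf_lbound; exists (fun x => a^-1 * \1_E x)%R => //.
have ge0u x : (0 <= a^-1 * \1_E x)%R.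
  by rewrite mulr_ge0 // invr_ge0 ltW.
split; [|split; [|split]].
- apply: measurable_funM; first exact: measurable_cst.
  exact: measurable_indic.
- have -> : (EFin \o (fun x => a^-1 * \1_E x)%R) = (fun x => (a^-1)%:E * (\1_E x)%:E).
    by apply/funext => x; rewrite /= EFinM.
  apply: integrableZl => //; exact: integrable_indic.
- rewrite (eq_integral (fun x => (a^-1)%:E * (\1_E x)%:E)); last first.
    by move=> x _; rewrite ger0_norm // EFinM.
  rewrite ge0_integralZl //; try (by rewrite lee_fin invr_ge0 ltW);
    try (by apply/measurable_EFinP; exact: measurable_indic).
  rewrite integral_indic // setIT.
  by rewrite nuE -EFinM mulVf // gt_eqF.
- split.
  + rewrite (_ : [set x | _] = set0) ?measure0; last first.
      by apply/seteqP; split => x //=; rewrite ltNge ge0u.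
    by rewrite nuT mule1 lee_fin invr_ge0.
  + rewrite (_ : [set x | _] = E); last first.
      apply/seteqP; split => x /=.
        rewrite indicE; case: (boolP (x \in E)) => [/set_mem //|].
        by rewrite mulr0 ltxx.
      by move=> Ex; rewrite indicE mem_set // mulr1 invr_gt0.
    by rewrite nuE nuT mule1 lee_fin.
Qed.


Lemma nu_fin A : measurable A -> exists a : R,
  (nu : {measure set X -> \bar R}) A = a%:E /\ (0 <= a)%R /\ (a <= 1)%R.
Proof.
move=> mA; have hf : (nu : {measure set X -> \bar R}) A \is a fin_num.
  exact: fin_num_measure.
exists (fine ((nu : {measure set X -> \bar R}) A)); rewrite fineK //; split => //.
split; first by apply: fine_ge0.
rewrite -lee_fin fineK //; rewrite -nuT; apply: le_measure => //; rewrite ?inE //.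
Qed.

Lemma nuC (A : set X) : measurable A ->
  (nu : {measure set X -> \bar R}) (@setC X A) = 1 - (nu : {measure set X -> \bar R}) A.
Proof. by move=> mA; exact: probability_setC. Qed.

Lemma PmC E : measurable E -> m_reversible m nu -> Pm m nu (~` E) = Pm m nu E.
Proof.
move=> mE rev; rewrite /Pm setCK rev //; exact: measurableC.
Qed.

Lemma lam_le_h : m_reversible m nu -> lambda1 m nu <= cheeger_const m nu.
Proof.
move=> rev; apply/ereal_infP => _ [D [mD [D0 D1]] <-].
have [a [nuD [a0 a1]]] := nu_fin mD.
have nuCD := nuC mD; rewrite nuD in nuCD D0 D1 *.
have e1 : 1 - a%:E = (1 - a)%:E by [].
rewrite e1 in nuCD.
set z := (X in mine _ X); have -> : z = (1 - a)%:E by exact: nuCD.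
rewrite lte_fin in D0; rewrite lte_fin in D1.
case: (lerP a 2%:R^-1) => ah.
  rewrite min_l; last by rewrite lee_fin; lra.
  rewrite inver gt_eqF // muleC; exact: lam_le.
rewrite min_r; last by rewrite lee_fin; lra.
rewrite inver gt_eqF ?subr_gt0 // muleC -(PmC mD rev).
apply: lam_le => //; first exact: measurableC.
- by rewrite subr_gt0.
- lra.
Qed.


Lemma mlt (f : X -> R) (r : R) : measurable_fun setT f ->
  measurable [set x | (r < f x)%R].
Proof.
move=> mf.
have -> : [set x | (r < f x)%R] = f @^-1` `]r, +oo[.
  by apply/seteqP; split => x /=; rewrite in_itv /= andbT.
rewrite -(setTI (f @^-1` _)); apply: mf => //; exact: measurable_itv.
Qed.

Lemma mgt (f : X -> R) (r : R) : measurable_fun setT f ->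
  measurable [set x | (f x < r)%R].
Proof.
move=> mf.
have -> : [set x | (f x < r)%R] = f @^-1` `]-oo, r[.
  by apply/seteqP; split => x /=; rewrite in_itv.
rewrite -(setTI (f @^-1` _)); apply: mf => //; exact: measurable_itv.
Qed.

Lemma indic_lt (f : X -> R) (r : R) y :
  \1_[set x | (r < f x)%R] y = ((r < f y)%R)%:R :> R.
Proof.
rewrite indicE; case: (boolP (r < f y)%R) => h.
  by rewrite mem_set.
by rewrite memNset //= ; apply/negP.
Qed.


Lemma Pm_lb c E : (0 <= c)%R -> c%:E <= cheeger_const m nu -> measurable E ->
  (nu : {measure set X -> \bar R}) E <= (2%:R^-1)%:E ->
  c%:E * (nu : {measure set X -> \bar R}) E <= Pm m nu E.
Proof.
move=> c0 ch mE E2.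
have [a [nuE [a0 a1]]] := nu_fin mE.
rewrite nuE in E2 *; rewrite lee_fin in E2.
case: (eqVneq a 0%R) => [->|an0]; first by rewrite mule0 Pm_ge0.
have apos : (0 < a)%R by rewrite lt_neqAle eq_sym an0 a0.
rewrite -lee_pdivlMr //.
apply: (le_trans ch); apply: ereal_inf_lbound; exists E.
  split => //; split; first by rewrite nuE lte_fin.
  by rewrite nuE lte_fin; lra.
have nuCE := nuC mE; rewrite nuE in nuCE.
have e1 : 1 - a%:E = (1 - a)%:E by [].
rewrite e1 in nuCE.
set z := (X in mine _ X); have -> : z = (1 - a)%:E by exact: nuCE.
rewrite nuE min_l; last by rewrite lee_fin; lra.
by rewrite inver gt_eqF.
Qed.

Lemma indic_ltN (f : X -> R) (r : R) y :
  \1_[set x | (r < - f x)%R] y = ((r < - f y)%R)%:R :> R.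
Proof. exact: (indic_lt (fun z => - f z)%R). Qed.

End M.

Section Series.
Context {R : realType}.
Local Open Scope ereal_scope.

Lemma PS1 (dl a b : R) : (0 < dl)%R ->
  \sum_(0 <= k <oo) ((dl * `|(((k%:R * dl < b)%R)%:R - ((k%:R * dl < a)%R)%:R)|)%:E)
    <= (`|(Order.max b 0 - Order.max a 0)| + dl)%:E.
Proof.
move=> dl0; apply: lime_le.
  by apply: is_cvg_nneseries => n _; rewrite lee_fin mulr_ge0 // ltW.
apply: nearW => n; rewrite sumEFin lee_fin; exact: L1.
Qed.

Lemma PS2 (dl a : R) : (0 < dl)%R ->
  (Order.max a 0)%:E <= \sum_(0 <= k <oo) ((dl * ((k%:R * dl < a)%R)%:R)%:E) + dl%:E.
Proof.
move=> dl0; have [n hn] := L2 a dl0.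
apply: le_trans; last first.
  apply: leeD2r; apply: (nneseries_lim_ge n).
  by move=> k _ _; rewrite lee_fin mulr_ge0 // ltW.
by rewrite sumEFin -EFinD lee_fin.
Qed.

End Series.

Section Hard.
Context (R : realType) (disp : measure_display) (X : measurableType disp)
  (m : R.-pker X ~> X) (nu : probability X R).
Local Open Scope ereal_scope.

Lemma mterm (dl : R) (B : set X) x : measurable B ->
  measurable_fun setT (fun y => (dl * `|(\1_B y - \1_B x)%R|)%:E).
Proof.
move=> mB; apply/measurable_EFinP; apply: measurable_funM; first exact: measurable_cst.
apply: measurableT_comp => //; apply: measurable_funB; first exact: measurable_indic.
exact: measurable_cst.
Qed.

Lemma int_term (dl : R) (B : set X) x : measurable B -> (0 <= dl)%R ->
  \int[m x]_y (dl * `|(\1_B y - \1_B x)%R|)%:E = dl%:E * gE m B x.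
Proof.
move=> mB dl0; rewrite /gE -ge0_integralZl //; try by rewrite lee_fin.
apply/measurable_EFinP; apply: measurableT_comp => //; apply: measurable_funB.
  exact: measurable_indic.
exact: measurable_cst.
Qed.

Lemma mser (dl : R) (B : nat -> set X) x : (0 <= dl)%R -> (forall k, measurable (B k)) ->
  measurable_fun setT (fun y => \sum_(0 <= k <oo) (dl * `|(\1_(B k) y - \1_(B k) x)%R|)%:E).
Proof.
move=> dl0 mB.
apply: (ge0_emeasurable_sum (P := xpredT)).
  by move=> k y _ _; rewrite lee_fin mulr_ge0.
by move=> k _; exact: mterm.
Qed.

Lemma int_ser (dl : R) (B : nat -> set X) x : (0 <= dl)%R -> (forall k, measurable (B k)) ->
  \int[m x]_y (\sum_(0 <= k <oo) (dl * `|(\1_(B k) y - \1_(B k) x)%R|)%:E) =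
  \sum_(0 <= k <oo) (dl%:E * gE m (B k) x).
Proof.
move=> dl0 mB; rewrite integral_nneseries //.
- by apply: eq_eseriesr => k _; rewrite int_term.
- by move=> k; exact: mterm.
- by move=> k y _; rewrite lee_fin mulr_ge0.
Qed.


Lemma inner (u : X -> R) (dl : R) x : measurable_fun setT u -> (0 < dl)%R ->
  \sum_(0 <= k <oo) (dl%:E * gE m [set y | (k%:R * dl < u y)%R] x) +
  \sum_(0 <= k <oo) (dl%:E * gE m [set y | (k%:R * dl < - u y)%R] x) <=
  \int[m x]_y (`|(u y - u x)%R|)%:E + (2 * dl)%:E.
Proof.
move=> mu dl0.
have mNu : measurable_fun setT (fun y => - u y)%R.
  exact: measurableT_comp mu.
have mE : forall k, measurable [set y | (k%:R * dl < u y)%R] by move=> k; exact: mlt.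
have mF : forall k, measurable [set y | (k%:R * dl < - u y)%R] by move=> k; exact: mlt.
rewrite -(int_ser x (ltW dl0) mE) -(int_ser x (ltW dl0) mF).
have mdu : measurable_fun setT (fun y => (`|(u y - u x)%R|)%:E).
  apply/measurable_EFinP; apply: measurableT_comp => //; apply: measurable_funB => //.
rewrite -ge0_integralD //; first last.
- exact: mser x (ltW dl0) mF.
- by move=> y _; apply: nneseries_ge0 => k _; rewrite lee_fin mulr_ge0 // ltW.
- exact: mser x (ltW dl0) mE.
- by move=> y _; apply: nneseries_ge0 => k _; rewrite lee_fin mulr_ge0 // ltW.
apply: (@le_trans _ _ (\int[m x]_y ((`|(u y - u x)%R| + 2 * dl)%R)%:E)).
  apply: ge0_le_integral => //.
  - by move=> y _; apply: adde_ge0; apply: nneseries_ge0 => k _; rewrite lee_fin mulr_ge0 // ltW.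
  - by apply: emeasurable_funD; [exact: mser x (ltW dl0) mE| exact: mser x (ltW dl0) mF].
  - apply/measurable_EFinP; apply: measurable_funD; last exact: measurable_cst.
    by apply/measurable_EFinP.
  move=> y _.
  under eq_eseriesr => k _ do rewrite !(indic_lt u).
  have hF k z : \1_[set y0 | (k%:R * dl < - u y0)%R] z = ((k%:R * dl < - u z)%R)%:R :> R.
    exact: indic_ltN.
  have sF : \sum_(0 <= k <oo) (dl * `|(\1_[set y0 | (k%:R * dl < - u y0)%R] y -
       \1_[set y0 | (k%:R * dl < - u y0)%R] x)%R|)%:E =
     \sum_(0 <= k <oo) (dl * `|(((k%:R * dl < - u y)%R)%:R - ((k%:R * dl < - u x)%R)%:R)%R|)%:E.
    by apply: eq_eseriesr => k _; rewrite !hF.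
  rewrite sF.
  apply: le_trans (leeD (PS1 (u x) (u y) dl0) (PS1 (- u x) (- u y) dl0))%R _.
  rewrite -EFinD lee_fin.
  have := maxdist (u x) (u y); lra.
rewrite (eq_integral (fun y => (`|(u y - u x)%R|)%:E + (2 * dl)%:E)) //.
rewrite ge0_integralD //; try exact: measurable_cst.
- by rewrite integral_cst // prob_kernel mule1.
- by move=> y _; rewrite lee_fin mulr_ge0 // ltW.
Qed.


Lemma hard_bound (u : X -> R) (c dl : R) : m_reversible m nu -> measurable_fun setT u ->
  \int[(nu : {measure set X -> \bar R})]_x (`|u x|)%:E = 1 -> is_median nu u 0 ->
  (0 <= c)%R -> c%:E <= cheeger_const m nu -> (0 < dl)%R ->
  exists s : \bar R, [/\ 0 <= s, 1 <= s + (2 * dl)%:E &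
    (2 * c)%:E * s <= \int[(nu : {measure set X -> \bar R})]_x \int[m x]_y (`|(u y - u x)%R|)%:E + (2 * dl)%:E].
Proof.
move=> rev mu hnorm [med1 med2] c0 ch dl0.
have mNu : measurable_fun setT (fun y => - u y)%R by exact: measurableT_comp mu.
pose E k := [set y | (k%:R * dl < u y)%R].
pose F k := [set y | (k%:R * dl < - u y)%R].
have mE : forall k, measurable (E k) by move=> k; exact: mlt.
have mF : forall k, measurable (F k) by move=> k; exact: mlt.
have nuT' : (nu : {measure set X -> \bar R}) setT = 1 by exact: nuT.
have med2' : (nu : {measure set X -> \bar R}) [set x | (0 < u x)%R] <= (2%:R^-1)%:E.
  by move: med2; rewrite nuT' mule1.
have med1' : (nu : {measure set X -> \bar R}) [set x | (u x < 0)%R] <= (2%:R^-1)%:E.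
  by move: med1; rewrite nuT' mule1.
have nuE k : (nu : {measure set X -> \bar R}) (E k) <= (2%:R^-1)%:E.
  apply: le_trans med2'.
  apply: le_measure; rewrite ?inE //; first exact: mlt.
  move=> y /= h; have k0 : (0 <= k%:R * dl)%R by rewrite mulr_ge0 // ltW.
  rewrite /E /= in h; lra.
have nuF k : (nu : {measure set X -> \bar R}) (F k) <= (2%:R^-1)%:E.
  apply: le_trans med1'.
  apply: le_measure; rewrite ?inE //.
    exact: mgt.
  move=> y /= h; have k0 : (0 <= k%:R * dl)%R by rewrite mulr_ge0 // ltW.
  rewrite /F /= in h; lra.
pose sE := \sum_(0 <= k <oo) (dl%:E * (nu : {measure set X -> \bar R}) (E k)).
pose sF := \sum_(0 <= k <oo) (dl%:E * (nu : {measure set X -> \bar R}) (F k)).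
exists (sE + sF); split.
- by apply: adde_ge0; apply: nneseries_ge0 => k *; (apply: mule_ge0;
    [rewrite lee_fin ltW | exact: measure_ge0]).
- have mS (B : nat -> set X) : (forall k, measurable (B k)) ->
      measurable_fun setT (fun x => \sum_(0 <= k <oo) (dl * \1_(B k) x)%:E).
    move=> mB; apply: (ge0_emeasurable_sum (P := xpredT)).
      by move=> k y _ _; rewrite lee_fin mulr_ge0 // ltW.
    move=> k _; apply/measurable_EFinP; apply: measurable_funM.
      exact: measurable_cst.
    exact: measurable_indic.
  have ser_int (B : nat -> set X) : (forall k, measurable (B k)) ->
      \int[(nu : {measure set X -> \bar R})]_x (\sum_(0 <= k <oo) (dl * \1_(B k) x)%:E) =
      \sum_(0 <= k <oo) (dl%:E * (nu : {measure set X -> \bar R}) (B k)).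
    move=> mB; rewrite integral_nneseries //.
    + apply: eq_eseriesr => k _.
      rewrite (eq_integral (fun x => dl%:E * (\1_(B k) x)%:E)) //.
      rewrite ge0_integralZl //; try by rewrite lee_fin ltW.
      * by rewrite integral_indic // setIT.
      * by apply/measurable_EFinP; exact: measurable_indic.
    + move=> k; apply/measurable_EFinP; apply: measurable_funM.
        exact: measurable_cst.
      exact: measurable_indic.
    + by move=> k y _; rewrite lee_fin mulr_ge0 // ltW.
  rewrite -hnorm /sE /sF -(ser_int E mE) -(ser_int F mF).
  have S0 (B : nat -> set X) x : 0 <= \sum_(0 <= k <oo) (dl * \1_(B k) x)%:E.
    by apply: nneseries_ge0 => k *; rewrite lee_fin mulr_ge0 // ltW.
  apply: (@le_trans _ _ (\int[(nu : {measure set X -> \bar R})]_x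
     (\sum_(0 <= k <oo) (dl * \1_(E k) x)%:E + \sum_(0 <= k <oo) (dl * \1_(F k) x)%:E + (2 * dl)%:E))).
    apply: ge0_le_integral => //.
    + by apply/measurable_EFinP; exact: measurableT_comp mu.
    + apply: emeasurable_funD; last exact: measurable_cst.
      by apply: emeasurable_funD; [exact: mS | exact: mS].
    move=> x _.
    have sE1 : \sum_(0 <= k <oo) (dl * \1_(E k) x)%:E =
        \sum_(0 <= k <oo) (dl * ((k%:R * dl < u x)%R)%:R)%:E.
      by apply: eq_eseriesr => k _; rewrite /E indic_lt.
    have sF1 : \sum_(0 <= k <oo) (dl * \1_(F k) x)%:E =
        \sum_(0 <= k <oo) (dl * ((k%:R * dl < - u x)%R)%:R)%:E.
      by apply: eq_eseriesr => k _; rewrite /F indic_ltN.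
    rewrite sE1 sF1 (absmax (u x)) EFinD.
    apply: le_trans (leeD (PS2 (u x) dl0) (PS2 (- u x) dl0)) _.
    rewrite addeACA -EFinD (_ : (dl + dl = 2 * dl)%R) //; ring.
  rewrite ge0_integralD //; last first.
  + by move=> x _; rewrite lee_fin mulr_ge0 // ltW.
  + by apply: emeasurable_funD; [exact: mS | exact: mS].
  + by move=> x _; apply: adde_ge0.
  rewrite ge0_integralD //; try exact: mS.
  by rewrite integral_cst // nuT' mule1 lexx.
- have mG (B : nat -> set X) : (forall k, measurable (B k)) ->
      measurable_fun setT (fun x => \sum_(0 <= k <oo) (dl%:E * gE m (B k) x)).
    move=> mB; apply: (ge0_emeasurable_sum (P := xpredT)).
      by move=> k x _ _; apply: mule_ge0; [rewrite lee_fin ltW | apply: integral_ge0].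
    by move=> k _; apply: measurable_funeM; exact: mgE.
  have G0 (B : nat -> set X) x : 0 <= \sum_(0 <= k <oo) (dl%:E * gE m (B k) x).
    by apply: nneseries_ge0 => k *; apply: mule_ge0; [rewrite lee_fin ltW | apply: integral_ge0].
  have intG (B : nat -> set X) : (forall k, measurable (B k)) ->
      \int[(nu : {measure set X -> \bar R})]_x (\sum_(0 <= k <oo) (dl%:E * gE m (B k) x)) =
      \sum_(0 <= k <oo) (dl%:E * (Pm m nu (B k) + Pm m nu (B k))).
    move=> mB; rewrite integral_nneseries //.
    + apply: eq_eseriesr => k _; rewrite ge0_integralZl //; try by rewrite lee_fin ltW.
      * by rewrite int_gE.
      * exact: mgE.
      * by move=> x _; apply: integral_ge0.
    + by move=> k; apply: measurable_funeM; exact: mgE.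
    + by move=> k x _; apply: mule_ge0; [rewrite lee_fin ltW | apply: integral_ge0].
  have termB (B : nat -> set X) : (forall k, measurable (B k)) ->
      (forall k, (nu : {measure set X -> \bar R}) (B k) <= (2%:R^-1)%:E) ->
      (2 * c)%:E * \sum_(0 <= k <oo) (dl%:E * (nu : {measure set X -> \bar R}) (B k)) <=
      \sum_(0 <= k <oo) (dl%:E * (Pm m nu (B k) + Pm m nu (B k))).
    move=> mB hB; rewrite -nneseriesZl; last first.
      by move=> k _; apply: mule_ge0; [rewrite lee_fin ltW | exact: measure_ge0].
    apply: lee_nneseries.
      move=> k _ _; apply: mule_ge0; first by rewrite lee_fin mulr_ge0.
      by apply: mule_ge0; [rewrite lee_fin ltW | exact: measure_ge0].
    move=> k _.
    have [b [nb [b0 b1]]] := nu_fin nu (mB k).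
    have hP := Pm_lb c0 ch (mB k) (hB k).
    rewrite nb in hP *.
    apply: (@le_trans _ _ (dl%:E * ((c * b)%:E + (c * b)%:E))).
      rewrite -!EFinD -!EFinM lee_fin le_eqVlt; apply/orP; left; apply/eqP; ring.
    apply: lee_wpmul2l; first by rewrite lee_fin ltW.
    exact: leeD.
  apply: (@le_trans _ _ (\int[(nu : {measure set X -> \bar R})]_x
      (\sum_(0 <= k <oo) (dl%:E * gE m (E k) x) + \sum_(0 <= k <oo) (dl%:E * gE m (F k) x)))).
    rewrite ge0_integralD //; try exact: mG.
    rewrite (intG _ mE) (intG _ mF) ge0_muleDr; last 2 first.
    + by apply: nneseries_ge0 => k *; apply: mule_ge0; [rewrite lee_fin ltW | exact: measure_ge0].
    + by apply: nneseries_ge0 => k *; apply: mule_ge0; [rewrite lee_fin ltW | exact: measure_ge0].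
    by apply: leeD; apply: termB.
  apply: (@le_trans _ _ (\int[(nu : {measure set X -> \bar R})]_x
      (\int[m x]_y (`|(u y - u x)%R|)%:E + (2 * dl)%:E))).
    apply: ge0_le_integral => //.
    + by move=> x _; apply: adde_ge0.
    + by apply: emeasurable_funD; exact: mG.
    + by apply: emeasurable_funD; [exact: mTV | exact: measurable_cst].
    by move=> x _; exact: inner.
  rewrite ge0_integralD //.
  + by rewrite integral_cst // nuT' mule1 lexx.
  + by move=> x _; apply: integral_ge0.
  + exact: mTV.
  + by move=> x _; rewrite lee_fin mulr_ge0 // ltW.
Qed.


Lemma TV_ge0 (u : X -> R) : 0 <= TVm m nu u.
Proof.
apply: mule_ge0; first by rewrite lee_fin invr_ge0.
by apply: integral_ge0 => x _; apply: integral_ge0.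
Qed.

Lemma h_le_TV (u : X -> R) : m_reversible m nu -> measurable_fun setT u ->
  \int[(nu : {measure set X -> \bar R})]_x (`|u x|)%:E = 1 -> is_median nu u 0 ->
  cheeger_const m nu <= TVm m nu u.
Proof.
move=> rev mu hnorm hmed.
have TV0 := TV_ge0 u.
have key : forall c, (0 <= c)%R -> c%:E <= cheeger_const m nu -> c%:E <= TVm m nu u.
  move=> c c0 ch; apply/lee_addgt0Pr => e e0.
  case: (eqVneq c 0%R) => [->|cn0].
    by apply: adde_ge0 => //; rewrite lee_fin ltW.
  have cpos : (0 < c)%R by rewrite lt_neqAle eq_sym cn0 c0.
  pose dl := (e / (1 + 2 * c))%R.
  have dpos : (1 + 2 * c > 0)%R by lra.
  have dl0 : (0 < dl)%R by rewrite /dl divr_gt0.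
  have he : (dl * (1 + 2 * c) = e)%R by rewrite /dl mulfVK // gt_eqF.
  have [s [s0 s1 s2]] := hard_bound rev mu hnorm hmed c0 ch dl0.
  move: s2; rewrite /TVm.
  set A := \int[_]_x _.
  have A0 : 0 <= A by apply: integral_ge0 => x _; apply: integral_ge0.
  move: A0; case: A => [t| |] // A0 s2; last first.
    by rewrite gt0_muley ?lte_fin ?invr_gt0 // addye // leey.
  move: s0 s1 s2; case: s => [s'| |] // s0 s1 s2; last first.
    by move: s2; rewrite gt0_muley ?lte_fin ?mulr_gt0 // leye_eq.
  rewrite !lee_fin in s0 s1 s2 A0 *.
  have h1 : (c * 1 <= c * (s' + 2 * dl))%R by rewrite ler_wpM2l.
  nra.
case Hh: (cheeger_const m nu) => [r| |].
- case: (lerP 0 r) => r0; first by apply: key => //; rewrite Hh.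
  by apply: le_trans TV0; rewrite lee_fin ltW.
- case HT: (TVm m nu u) => [t| |] //.
    have t0 : (0 <= `|t| + 1)%R by rewrite addr_ge0 // normr_ge0.
    have hk := key (`|t| + 1)%R t0 (ltac:(by rewrite Hh leey)).
    rewrite HT lee_fin in hk.
    have h2 := ler_norm t; exfalso; move: hk h2; clear => hk h2; lra.
  by move: TV0; rewrite HT.
- by rewrite leNye.
Qed.

End Hard.

Unset Implicit Arguments.

Theorem theorem3p11 (R : realType) (disp : measure_display) (X : measurableType disp)
    (d : X -> X -> R) (m : R.-pker X ~> X) (nu : probability X R) :
  metric_random_walk_space d m ->
  m_invariant m nu -> m_reversible m nu ->
  cheeger_const m nu = lambda1 m nu.
Proof.
move=> _ _ rev; apply/eqP; rewrite eq_le; apply/andP; split.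
  apply/ereal_infP => _ [u [mu [iu [hn hmed]]] <-].
  exact: h_le_TV.
exact: lam_le_h.
Qed.
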